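(* Let $b > 0$ with $b \neq 1$, let $p > 0$, and let $\epsilon \in (0,1)$. The fast approximate exponentiation algorithm described below, run on base $b$, exponent $p$ and a depth $i = \mathcal{O}\left(\log\left(\frac{|\log b|}{\epsilon}\right)\right)$, outputs a number $r$ satisfying $(1-\epsilon)\, b^p \leq r \leq (1+\epsilon)\, b^p$, i.e. a $(1\pm\epsilon)$-approximation of $b^p$, after performing $\mathcal{O}\left(\log\left(\frac{|\log b|}{\epsilon}\right)\right)$ operations.
   Context: Fast approximate exponentiation algorithm (input: base $b>0$, exponent $p>0$, depth $i\in\mathbb{N}$), using only multiplications, divisions and square roots. Write $p = z + f$ with $z = \lfloor p \rfloor$ and $f = p - \lfloor p\rfloor \in [0,1)$. (1) Compute $b^{z}$ exactly by binary exponentiation: if $z = \sum_{j=0}^{t} 2^{t-j} c_j$ is the binary representation of $z$ ($c_0 = 1$), set $n_0 = 1$, $n_j = 2 n_{j-1} + c_j$, and correspondingly $b^{n_j} = (b^{n_{j-1}})^2 b^{c_j}$. (2) Approximate $b^{f}$ by $b^{f'}$ where $f' = \sum_{j=1}^{i} s_j 2^{-j}$ is a dyadic rational built greedily: $s_1 = 1$, and for $j>1$, $s_j = 1$ if the current partial sum $\sum_{l<j} s_l 2^{-l}$ is less than $f$, $s_j = -1$ if it is greater than $f$, and the process stops if it equals $f$; so $|f - f'| \leq 2^{-i}$. The power $b^{f'}$ is accumulated by computing successive square roots $b^{1/2^j}$ and multiplying (if $s_j=1$) or dividing (if $s_j=-1$) by $b^{1/2^j}$. The output is $r = b^{z}\,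 b^{f'}$. *)

(* Defs.v *)
From Stdlib Require Import Reals Lra Lia ZArith.
Open Scope R_scope.

(* Operations counted: multiplications, divisions, square roots
   (comparisons / bookkeeping of the dyadic partial sum are not counted). *)

(* Step (1): binary exponentiation, reading the binary digits of z > 0 from
   the most significant one (c_0 = 1): b^{n_j} = (b^{n_{j-1}})^2 * b^{c_j}.
   Returns (value, number of operations). *)
Fixpoint bin_exp (b : R) (z : positive) : R * nat :=
  match z with
  | xH => (b, 0%nat)
  | xO q => let (v, k) := bin_exp b q in (v * v, S k)
  | xI q => let (v, k) := bin_exp b q in (v * v * b, S (S k))
  end.

Definition int_pow (b : R) (z : Z) : R * nat :=
  match z with
  | Zpos q => bin_exp b q
  | _ => (1, 0%nat)
  end.

(* Step (2): greedy dyadic approximation of b^f.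
   [frac_loop n j f s acc r ops]: n remaining steps, j = index of the current
   step, s = current partial sum sum_{l<j} s_l 2^{-l}, acc = b^s,
   r = b^{1/2^{j-1}}. *)
Fixpoint frac_loop (n j : nat) (f s acc r : R) (ops : nat) : R * nat :=
  match n with
  | O => (acc, ops)
  | S m =>
      let r' := sqrt r in
      if Nat.eqb j 1 then
        frac_loop m (S j) f (s + / 2 ^ j) (acc * r') r' (ops + 2)
      else if Rlt_dec s f then
        frac_loop m (S j) f (s + / 2 ^ j) (acc * r') r' (ops + 2)
      else if Rlt_dec f s then
        frac_loop m (S j) f (s - / 2 ^ j) (acc / r') r' (ops + 2)
      else (acc, ops)
  end.

Definition fast_exp (b p : R) (i : nat) : R * nat :=
  let (bz, k1) := int_pow b (Int_part p) in
  let (bf, k2) := frac_loop i 1 (frac_part p) 0 1 b 0 in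
  (bz * bf, (k1 + k2 + 1)%nat).

(* The quantity log(|log b| / eps) inside the O(.), clipped below at 0
   (so that 1 + LogTerm b eps >= 1 is a sensible O-bound). *)
Definition LogTerm (b eps : R) : R := Rmax 0 (ln (Rabs (ln b) / eps)).

(* Main.v *)
Require Import Defs.
From Stdlib Require Import Reals Lra Lia ZArith.
Open Scope R_scope.

Lemma Rabs_le_between x y : Rabs x <= y <-> - y <= x <= y.
Proof. unfold Rabs; destruct (Rcase_abs x); split; intros; lra. Qed.

Lemma Rpower_pos b x : 0 < Rpower b x.
Proof. unfold Rpower. apply exp_pos. Qed.

Lemma sqrt_Rpower b x : sqrt (Rpower b x) = Rpower b (x / 2).
Proof.
  replace (Rpower b x) with (Rpower b (x/2) * Rpower b (x/2)).
  - apply sqrt_square. left; apply Rpower_pos.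
  - rewrite <- Rpower_plus. f_equal. field.
Qed.

Lemma frac_inv b f : 0 <= f < 1 -> forall n k s acc r ops,
  acc = Rpower b s -> r = Rpower b (/ 2 ^ k) ->
  (k = 0%nat -> s = 0) -> Rabs (f - s) <= / 2 ^ k ->
  exists s', fst (frac_loop n (S k) f s acc r ops) = Rpower b s' /\
    Rabs (f - s') <= / 2 ^ (k + n) /\
    (snd (frac_loop n (S k) f s acc r ops) <= ops + 2 * n)%nat.
Proof.
  intros Hf n. induction n as [|n IH]; intros k s acc r ops Hacc Hr Hk Hs.
  - exists s. simpl. rewrite Nat.add_0_r. repeat split; auto; lia.
  - assert (Hr' : sqrt r = Rpower b (/ 2 ^ S k)).
    { rewrite Hr, sqrt_Rpower. f_equal. simpl. field. apply pow_nonzero; lra. }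
    assert (H2 : 0 < 2 ^ k) by (apply pow_lt; lra).
    assert (Hplus : forall s1, Rabs (f - s1) <= / 2 ^ (S k) ->
       exists s', fst (frac_loop n (S (S k)) f s1 (Rpower b s1) (sqrt r) (ops+2)%nat) = Rpower b s' /\
        Rabs (f - s') <= / 2 ^ (k + S n) /\
        (snd (frac_loop n (S (S k)) f s1 (Rpower b s1) (sqrt r) (ops+2)%nat) <= ops + 2 * S n)%nat).
    { intros s1 Hs1. destruct (IH (S k) s1 (Rpower b s1) (sqrt r) (ops + 2)%nat) as [s' [A [B C]]];
        auto; try discriminate.
      exists s'. replace (k + S n)%nat with (S k + n)%nat by lia. repeat split; auto. lia. }
    simpl frac_loop.
    destruct (Nat.eqb k 0) eqn:E.
    + apply Nat.eqb_eq in E. assert (k = 0%nat) by lia. subst k.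
      rewrite Hk in * by reflexivity.
      replace (acc * sqrt r) with (Rpower b (0 + / 2 ^ 1)).
      2:{ rewrite Hacc, Hr', Rpower_plus. reflexivity. }
      apply Hplus. simpl. rewrite Rabs_le_between. split; lra.
    + assert (Hb : / 2 ^ S k = / 2 ^ k / 2) by (simpl; field; lra).
      destruct (Rlt_dec s f).
      * replace (acc * sqrt r) with (Rpower b (s + / 2 ^ S k)).
        2:{ rewrite Hacc, Hr', Rpower_plus. reflexivity. }
        apply Hplus. rewrite Hb. rewrite Rabs_le_between in *.
        assert (0 < / 2 ^ k) by (apply Rinv_0_lt_compat; lra). split; lra.
      * destruct (Rlt_dec f s).
        -- replace (acc / sqrt r) with (Rpower b (s - / 2 ^ S k)).
           2:{ rewrite Hacc, Hr'. unfold Rminus, Rdiv. rewrite Rpower_plus, Rpower_Ropp. reflexivity. }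
           apply Hplus. rewrite Hb. rewrite Rabs_le_between in *.
           assert (0 < / 2 ^ k) by (apply Rinv_0_lt_compat; lra). split; lra.
        -- exists s. simpl. repeat split; auto; try lia.
           replace (f - s) with 0 by lra. rewrite Rabs_R0. left.
           apply Rinv_0_lt_compat, pow_lt; lra.
Qed.

Lemma bin_exp_val b q : fst (bin_exp b q) = b ^ Pos.to_nat q.
Proof.
  induction q as [q IH|q IH|]; cbn [bin_exp].
  - destruct (bin_exp b q) as [v k]. cbn [fst] in *. subst.
    rewrite Pos2Nat.inj_xI. generalize (Pos.to_nat q) as m. intro m. simpl. rewrite Nat.add_0_r, pow_add. ring.
  - destruct (bin_exp b q) as [v k]. cbn [fst] in *. subst.
    rewrite Pos2Nat.inj_xO. generalize (Pos.to_nat q) as m. intro m. simpl. rewrite Nat.add_0_r, pow_add. ring.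
  - simpl. ring.
Qed.

Lemma bin_exp_ops b b' q : snd (bin_exp b q) = snd (bin_exp b' q).
Proof.
  induction q as [q IH|q IH|]; simpl; auto;
  destruct (bin_exp b q), (bin_exp b' q); simpl in *; subst; auto.
Qed.

Lemma int_pow_val b z : 0 < b -> (0 <= z)%Z -> fst (int_pow b z) = Rpower b (IZR z).
Proof.
  intros Hb Hz. destruct z as [|q|q]; simpl.
  - unfold Rpower. rewrite Rmult_0_l, exp_0. reflexivity.
  - rewrite bin_exp_val, <- Rpower_pow by auto. f_equal.
    rewrite INR_IZR_INZ, positive_nat_Z. reflexivity.
  - lia.
Qed.

Lemma exp_approx x eps : 0 < eps < 1 -> Rabs x <= eps / 2 ->
  1 - eps <= exp x <= 1 + eps.
Proof.
  intros He Hx. rewrite Rabs_le_between in Hx.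
  pose proof (exp_ineq1_le x). pose proof (exp_ineq1_le (- x)).
  assert (exp x * exp (-x) = 1) by (rewrite <- exp_plus; replace (x + -x) with 0 by ring; apply exp_0).
  pose proof (exp_pos x). pose proof (exp_pos (-x)).
  split; nra.
Qed.

Lemma ln2_gt : / 2 <= ln 2.
Proof.
  assert (exp (/2) < 2).
  { pose proof exp_le_3. assert (exp (/2) * exp (/2) = exp 1) by (rewrite <- exp_plus; f_equal; field).
    pose proof (exp_pos (/2)). nra. }
  left. rewrite <- (ln_exp (/2)). apply ln_increasing; auto. apply exp_pos.
Qed.

Theorem theorem2 :
  exists C_depth : R,
  forall p : R, 0 < p ->
  exists C_ops : R,
  forall b eps : R, 0 < b -> b <> 1 -> 0 < eps < 1 ->
  exists i : nat,
    INR i <= C_depth * (1 + LogTerm b eps) /\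
    (1 - eps) * Rpower b p <= fst (fast_exp b p i) <= (1 + eps) * Rpower b p /\
    INR (snd (fast_exp b p i)) <= C_ops * (1 + LogTerm b eps).
Proof.
  exists 4. intros p Hp.
  exists (INR (snd (int_pow 1 (Int_part p))) + 9).
  intros b eps Hb Hb1 He.
  set (LT := LogTerm b eps).
  assert (HLT0 : 0 <= LT) by apply Rmax_l.
  set (N := Z.to_nat (up (2 * LT))).
  destruct (archimed (2 * LT)) as [U1 U2].
  assert (HupZ : (0 <= up (2 * LT))%Z).
  { apply le_IZR. lra. }
  assert (HN : INR N = IZR (up (2 * LT))).
  { unfold N. rewrite INR_IZR_INZ, Z2Nat.id; auto. }
  assert (HlnB : 0 < Rabs (ln b)).
  { apply Rabs_pos_lt. intro H0. apply Hb1. rewrite <- (exp_ln b) by auto. rewrite H0. apply exp_0. }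
  set (A := Rabs (ln b) / eps).
  assert (HA : 0 < A) by (unfold A; apply Rdiv_lt_0_compat; lra).
  assert (HAN : A <= 2 ^ N).
  { rewrite <- (exp_ln A) by auto. rewrite <- Rpower_pow by lra. unfold Rpower.
    assert (ln A <= LT) by apply Rmax_r.
    pose proof ln2_gt. pose proof (pos_INR N).
    destruct (Req_dec (ln A) (INR N * ln 2)) as [E|E]; [rewrite E; lra|].
    left. apply exp_increasing. nra. }
  exists (S N).
  pose proof (base_Int_part p) as [I1 I2].
  assert (HZ : (0 <= Int_part p)%Z).
  { assert (-1 < IZR (Int_part p)) by lra.
    assert (-1 < Int_part p)%Z by (apply lt_IZR; auto). lia. }
  pose proof (base_fp p) as [F1 F2].
  assert (Hf : 0 <= frac_part p < 1) by lra.
  destruct (frac_inv b (frac_part p) Hf (S N) 0 0 1 b 0) as [s' [Hv [Hd Ho]]].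
  - unfold Rpower. rewrite Rmult_0_l, exp_0. reflexivity.
  - simpl. unfold Rpower. rewrite Rinv_1, Rmult_1_l, exp_ln; auto.
  - auto.
  - simpl. rewrite Rinv_1, Rminus_0_r, Rabs_pos_eq; lra.
  - unfold fast_exp.
    pose proof (int_pow_val b _ Hb HZ) as Hz.
    assert (Hops : snd (int_pow b (Int_part p)) = snd (int_pow 1 (Int_part p))).
    { destruct (Int_part p); simpl; auto. apply bin_exp_ops. }
    destruct (int_pow b (Int_part p)) as [bz k1].
    destruct (frac_loop (S N) 1 (frac_part p) 0 1 b 0) as [bf k2].
    simpl in *. subst bz bf k1.
    assert (HINR : INR (S N) <= 4 * (1 + LT)).
    { rewrite S_INR. lra. }
    split; [exact HINR|]. split.
    + rewrite <- Rpower_plus.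
      replace (IZR (Int_part p) + s') with (p + (s' - frac_part p)).
      2:{ unfold frac_part. ring. }
      rewrite Rpower_plus.
      assert (Hx : 1 - eps <= Rpower b (s' - frac_part p) <= 1 + eps).
      { unfold Rpower. apply exp_approx; auto.
        rewrite Rabs_mult, Rabs_minus_sym.
        assert (0 < 2 ^ N) by (apply pow_lt; lra).
        apply Rle_trans with (/ 2 ^ S N * Rabs (ln b)).
        - apply Rmult_le_compat_r; auto. apply Rabs_pos.
        - simpl. unfold A in HAN.
          apply Rmult_le_reg_l with (2 * 2 ^ N). lra.
          replace (2 * 2 ^ N * (/ (2 * 2 ^ N) * Rabs (ln b))) with (Rabs (ln b)) by (field; lra).
          apply Rmult_le_reg_r with (/ eps). apply Rinv_0_lt_compat; lra.
          replace (2 * 2 ^ N * (eps / 2) * / eps) with (2 ^ N) by (field; lra).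
          exact HAN. }
      pose proof (Rpower_pos b p). split; nra.
    + assert (Ho' : (k2 <= 2 * S N)%nat) by lia. apply le_INR in Ho'.
      rewrite mult_INR in Ho'. change (INR 2) with 2 in Ho'.
      rewrite !plus_INR. change (INR 1) with 1.
      pose proof (pos_INR (snd (int_pow 1 (Int_part p)))).
      nra.
Qed.
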